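(* Let $\mathcal{H}$ be a reproducing kernel Hilbert space (RKHS) of real-valued functions on the state-action space $\mathfrak{Z} \coloneqq \mathfrak{S} \times \mathfrak{A}$ (state space $\mathfrak{S} \subset \mathbb{R}^D$, action space $\mathfrak{A}$), with inner product $\langle\cdot,\cdot\rangle_{\mathcal{H}}$, norm $\|\cdot\|_{\mathcal{H}}$, reproducing kernel $\kappa$ and feature map $\varphi(\mathbf{z}) \coloneqq \kappa(\mathbf{z},\cdot)$. Let $\mathcal{M}$ be the set of all mappings (stationary policies) $\mu \colon \mathfrak{S} \to \mathfrak{A}$, let $g \in \mathcal{H}$, $\alpha > 0$, let $\{\mathbf{s}_i^{\mathrm{av}}\}_{i=1}^{N_{\mathrm{av}}} \subset \mathfrak{S}$ be user-chosen states, and let $\{\psi_i\}_{i=1}^{N_{\mathrm{av}}} \subset \mathcal{H}$, with $\boldsymbol{\Psi} \coloneqq [\psi_1, \ldots, \psi_{N_{\mathrm{av}}}]$. For $\mu \in \mathcal{M}$ define $\boldsymbol{\Phi}_{\mu}^{\mathrm{av}} \coloneqq [\varphi(\mathbf{s}_1^{\mathrm{av}}, \mu(\mathbf{s}_1^{\mathrm{av}})), \ldots, \varphi(\mathbf{s}_{N_{\mathrm{av}}}^{\mathrm{av}}, \mu(\mathbf{s}_{N_{\mathrm{av}}}^{\mathrm{av}}))]$, and the $N_{\mathrm{av}} \times N_{\mathrm{av}}$ kernel matrices $\mathbf{K}_{\Psi} \coloneqq \boldsymbol{\Psi}^{\intercal}\boldsymbol{\Psi}$ (entries $\langle \psi_i,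 \psi_j\rangle_{\mathcal{H}}$) and $\mathbf{K}_{\mu}^{\mathrm{av}} \coloneqq \boldsymbol{\Phi}_{\mu}^{\mathrm{av}\intercal}\boldsymbol{\Phi}_{\mu}^{\mathrm{av}}$ (entries $\kappa((\mathbf{s}_i^{\mathrm{av}}, \mu(\mathbf{s}_i^{\mathrm{av}})), (\mathbf{s}_j^{\mathrm{av}}, \mu(\mathbf{s}_j^{\mathrm{av}})))$). Define the Bellman mappings $T_{\mu}, T \colon \mathcal{H} \to \mathcal{H}$ by $T_{\mu}(Q) \coloneqq g + \alpha \sum_{i=1}^{N_{\mathrm{av}}} Q(\mathbf{s}_i^{\mathrm{av}}, \mu(\mathbf{s}_i^{\mathrm{av}}))\, \psi_i = g + \alpha \boldsymbol{\Psi}\boldsymbol{\Phi}_{\mu}^{\mathrm{av}\intercal} Q$ and $T(Q) \coloneqq g + \alpha \sum_{i=1}^{N_{\mathrm{av}}} \inf_{a \in \mathfrak{A}} Q(\mathbf{s}_i^{\mathrm{av}}, a)\, \psi_i$. Then for all $Q_1, Q_2 \in \mathcal{H}$ and all $\mu \in \mathcal{M}$, $\|T_{\mu}(Q_1) - T_{\mu}(Q_2)\|_{\mathcal{H}} \leq \beta \|Q_1 - Q_2\|_{\mathcal{H}}$ and $\|T(Q_1) - T(Q_2)\|_{\mathcal{H}} \leq \beta \|Q_1 - Q_2\|_{\mathcal{H}}$, where $\beta \coloneqq \alpha \big( \|\mathbf{K}_{\Psi}\|_2 \, \sup_{\mu' \in \mathcal{M}} \|\mathbf{K}_{\mu'}^{\mathrm{av}}\|_2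 \big)^{1/2}$ and $\|\cdot\|_2$ is the spectral norm of a matrix. Hence, if $\beta = 1$ the mappings $T_{\mu}, T$ are nonexpansive, and if $\beta < 1$ they are contractions in $(\mathcal{H}, \langle\cdot,\cdot\rangle_{\mathcal{H}})$.
   Context: Setting: nonparametric Bellman mappings for reinforcement learning defined directly in an RKHS, where the one-step loss $g$ and the Q-functions belong to $\mathcal{H}$; the functions $\psi_i$ and states $\mathbf{s}_i^{\mathrm{av}}$ are user-chosen design parameters used to approximate the conditional expectation of the classical Bellman maps by sample averaging. *)

(* Defs.v *)
From HB Require Import structures.
From mathcomp Require Import all_boot all_order all_algebra.
From mathcomp Require Import all_classical all_reals.
Set Implicit Arguments. Unset Strict Implicit. Unset Printing Implicit Defensive.
Import Order.TTheory GRing.Theory Num.Theory.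
Local Open Scope ring_scope.
Local Open Scope classical_set_scope.

Section RKHSDefs.
Variable R : realType.

Definition is_inner_product (H : lmodType R) (ip : H -> H -> R) : Prop :=
  [/\ (forall x y, ip x y = ip y x),
      (forall (a : R) x y z, ip (a *: x + y) z = a * ip x z + ip y z),
      (forall x, 0 <= ip x x) &
      (forall x, ip x x = 0 -> x = 0)].

Definition ipnorm (H : lmodType R) (ip : H -> H -> R) (x : H) : R :=
  Num.sqrt (ip x x).

Definition ip_complete (H : lmodType R) (ip : H -> H -> R) : Prop :=
  forall u : nat -> H,
    (forall e : R, 0 < e -> exists N : nat, forall m n : nat,
        (N <= m)%N -> (N <= n)%N -> ipnorm ip (u m - u n) < e) ->
    exists l : H, forall e : R, 0 < e -> exists N : nat, forall n : nat,
        (N <= n)%N -> ipnorm ip (u n - l) < e.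

(* (H, ip) is a reproducing kernel Hilbert space of real-valued functions on Z,
   where [ev f z] is the value f(z) of the function f : H at z, and kappa is the
   reproducing kernel: the feature map phi(z) = kappa(z, .) lies in H and
   <f, phi(z)>_H = f(z). *)
Definition is_RKHS (Z : Type) (H : lmodType R) (ip : H -> H -> R)
    (ev : H -> Z -> R) (kappa : Z -> Z -> R) : Prop :=
  [/\ is_inner_product ip,
      ip_complete ip,
      (forall (a : R) f g z, ev (a *: f + g) z = a * ev f z + ev g z),
      (forall f g : H, (forall z, ev f z = ev g z) -> f = g) &
      (forall z : Z, exists phiz : H,
          (forall z', ev phiz z' = kappa z z') /\
          (forall f : H, ip f phiz = ev f z))].

Definition vnorm (n : nat) (x : 'cV[R]_n) : R :=
  Num.sqrt (\sum_(i < n) (x i 0) ^+ 2).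

Definition specnorm (n : nat) (M : 'M[R]_n) : R :=
  sup [set vnorm (M *m x) | x in [set x : 'cV[R]_n | vnorm x <= 1]].

End RKHSDefs.

(* Main.v *)
Require Import Defs.
From HB Require Import structures.
From mathcomp Require Import all_boot all_order all_algebra.
From mathcomp Require Import all_classical all_reals.
From mathcomp Require Import ring lra.
Import Order.TTheory GRing.Theory Num.Theory.
Set Implicit Arguments. Unset Strict Implicit.
Local Open Scope ring_scope.
Local Open Scope classical_set_scope.

Section IP.
Variables (R : realType) (H : lmodType R) (ip : H -> H -> R).
Hypothesis hip : is_inner_product ip.

Lemma ipC x y : ip x y = ip y x. Proof. by case: hip. Qed.
Lemma ipL a x y z : ip (a *: x + y) z = a * ip x z + ip y z. Proof. by case: hip. Qed.
Lemma ip0l z : ip 0 z = 0.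
Proof. have := ipL 1 0 0 z; rewrite scaler0 addr0 mul1r => h. set a := ip 0 z in h *. lra. Qed.
Lemma ipDl x y z : ip (x + y) z = ip x z + ip y z.
Proof. by rewrite -{1}[x]scale1r ipL mul1r. Qed.
Lemma ipZl a x z : ip (a *: x) z = a * ip x z.
Proof. by rewrite -[a *: x]addr0 ipL ip0l addr0. Qed.
Lemma ipsuml n (F : 'I_n -> H) z : ip (\sum_i F i) z = \sum_i ip (F i) z.
Proof. by elim/big_rec2: _ => [|i y1 y2 _ <-]; rewrite ?ip0l ?ipDl. Qed.
Lemma ip0r z : ip z 0 = 0. Proof. by rewrite ipC ip0l. Qed.
Lemma ipZr a x z : ip z (a *: x) = a * ip z x. Proof. by rewrite ipC ipZl ipC. Qed.
Lemma ipsumr n (F : 'I_n -> H) z : ip z (\sum_i F i) = \sum_i ip z (F i).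
Proof. rewrite ipC ipsuml. apply: eq_bigr => i _. exact: ipC. Qed.
Lemma ipge0 x : 0 <= ip x x. Proof. by case: hip. Qed.
Lemma ipdef x : ip x x = 0 -> x = 0. Proof. by case: hip => _ _ _; apply. Qed.

Lemma ipDr x y z : ip z (x + y) = ip z x + ip z y.
Proof. by rewrite ipC ipDl ipC [ip y z]ipC. Qed.

Lemma ipCS x y : ip x y ^+ 2 <= ip x x * ip y y.
Proof.
have [c0|cpos] := eqVneq (ip y y) 0.
  by rewrite (ipdef c0) !ip0r expr0n /= mulr0.
have hc : 0 < ip y y by rewrite lt_def cpos ipge0.
set t := ip x y / ip y y.
have ht : t * ip y y = ip x y by rewrite /t divfK.
have := ipge0 (x + (- t) *: y).
rewrite ipDl !ipZl !ipDr !ipZr [ip y x]ipC.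
move: ht hc; set a := ip x x; set b := ip x y; set c := ip y y => ht hc h.
nra.
Qed.
End IP.

Section Vec.
Variable R : realType.
Variable n : nat.
Definition dot (x y : 'cV[R]_n) : R := \sum_i x i 0 * y i 0.

Lemma dot_ip : is_inner_product dot.
Proof.
split.
- by move=> x y; apply: eq_bigr => i _; rewrite mulrC.
- move=> a x y z; rewrite /dot mulr_sumr -big_split /=; apply: eq_bigr => i _.
  by rewrite !mxE mulrDl mulrA.
- by move=> x; apply: sumr_ge0 => i _; rewrite -expr2 sqr_ge0.
- move=> x /eqP; rewrite psumr_eq0 => [/allP h|i _]; last by rewrite -expr2 sqr_ge0.
  apply/matrixP => i j; rewrite (ord1 j) mxE.
  by have /= := h i (mem_index_enum _); rewrite mulf_eq0 orbb => /eqP.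
Qed.

Lemma vnorm_dot (x : 'cV[R]_n) : vnorm x = Num.sqrt (dot x x).
Proof. by rewrite /vnorm /dot; congr Num.sqrt; apply: eq_bigr => i _; rewrite expr2. Qed.

Lemma dot_ge0 (x : 'cV[R]_n) : 0 <= dot x x. Proof. exact: (ipge0 dot_ip). Qed.

Lemma vnormK (x : 'cV[R]_n) : vnorm x ^+ 2 = dot x x.
Proof. by rewrite vnorm_dot sqr_sqrtr // dot_ge0. Qed.

Lemma vnorm_ge0 (x : 'cV[R]_n) : 0 <= vnorm x. Proof. exact: sqrtr_ge0. Qed.

Lemma dotCS (x y : 'cV[R]_n) : dot x y <= vnorm x * vnorm y.
Proof.
rewrite !vnorm_dot -sqrtrM ?dot_ge0 //.
apply: le_trans (ler_norm _) _.
rewrite -sqrtr_sqr; apply: ler_wsqrtr; exact: (ipCS dot_ip).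
Qed.

Lemma vnormZ (c : R) (x : 'cV[R]_n) : vnorm (c *: x) = `|c| * vnorm x.
Proof.
rewrite !vnorm_dot (ipZl dot_ip) (ipZr dot_ip) mulrA -expr2 sqrtrM ?sqr_ge0 //.
by rewrite sqrtr_sqr.
Qed.

Definition snset (M : 'M[R]_n) :=
  [set vnorm (M *m x) | x in [set x : 'cV[R]_n | vnorm x <= 1]].

Lemma snset_ub (M : 'M[R]_n) : has_ubound (snset M).
Proof.
exists (Num.sqrt (\sum_i dot (\col_j M i j) (\col_j M i j))).
move=> _ [x /= hx <-]; rewrite vnorm_dot; apply: ler_wsqrtr.
apply: ler_sum => i _.
have -> : (M *m x) i 0 = dot (\col_j M i j) x.
  by rewrite mxE; apply: eq_bigr => j _; rewrite mxE.
have h1 : dot x x <= 1.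
  by rewrite -vnormK; have := vnorm_ge0 x; nra.
have := ipCS dot_ip (\col_j M i j) x.
have := dot_ge0 (\col_j M i j).
rewrite -expr2; nra.
Qed.

Lemma snset_has_sup (M : 'M[R]_n) : has_sup (snset M).
Proof.
split; last exact: snset_ub.
exists (vnorm (M *m 0)); exists 0 => //=.
by rewrite vnorm_dot /dot big1 ?sqrtr0 // => i _; rewrite mxE mul0r.
Qed.

Lemma vnorm0 : vnorm (0 : 'cV[R]_n) = 0.
Proof. by rewrite vnorm_dot /dot big1 ?sqrtr0 // => i _; rewrite mxE mul0r. Qed.

Lemma specnorm_ub (M : 'M[R]_n) (x : 'cV[R]_n) : vnorm x <= 1 -> vnorm (M *m x) <= specnorm M.
Proof. by move=> hx; apply: sup_upper_bound; [exact: snset_has_sup|exists x]. Qed.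

Lemma specnorm_ge0 (M : 'M[R]_n) : 0 <= specnorm M.
Proof. by rewrite -vnorm0 -(mulmx0 _ M); apply: specnorm_ub; rewrite vnorm0. Qed.

Lemma specnorm_bound (M : 'M[R]_n) (x : 'cV[R]_n) : vnorm (M *m x) <= specnorm M * vnorm x.
Proof.
have [x0|xn0] := eqVneq (vnorm x) 0.
  have : x = 0.
    by apply: (ipdef dot_ip); rewrite -vnormK x0 expr0n.
  by move=> ->; rewrite mulmx0 !vnorm0 mulr0.
have xp : 0 < vnorm x by rewrite lt_def xn0 vnorm_ge0.
have := specnorm_ub M (x := (vnorm x)^-1 *: x).
rewrite vnormZ -scalemxAr vnormZ ger0_norm ?invr_ge0 ?vnorm_ge0 // mulVf // lexx.
by move=> /(_ isT); rewrite -(ler_pM2r xp) mulrAC mulVf // mul1r.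
Qed.
End Vec.

Section Quad.
Variables (R : realType) (H : lmodType R) (ip : H -> H -> R).
Hypothesis hip : is_inner_product ip.

Lemma quad n (w : 'I_n -> H) (v : 'I_n -> R) :
  ip (\sum_i v i *: w i) (\sum_i v i *: w i) <=
  specnorm (\matrix_(i, j) ip (w i) (w j) : 'M[R]_n) * \sum_i v i ^+ 2.
Proof.
set G : 'M[R]_n := \matrix_(i, j) ip (w i) (w j).
set vv : 'cV[R]_n := \col_i v i.
have e1 : ip (\sum_i v i *: w i) (\sum_i v i *: w i) = dot vv (G *m vv).
  rewrite (ipsuml hip) /dot; apply: eq_bigr => i _.
  rewrite (ipZl hip) (ipsumr hip) !mxE; congr (_ * _); apply: eq_bigr => j _.
  by rewrite (ipZr hip) !mxE mulrC.
have e2 : \sum_i v i ^+ 2 = vnorm vv ^+ 2.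
  by rewrite vnormK /dot; apply: eq_bigr => i _; rewrite mxE expr2.
rewrite e1 e2; apply: le_trans (dotCS _ _) _.
rewrite expr2 mulrCA; apply: ler_wpM2l; first exact: vnorm_ge0.
exact: specnorm_bound.
Qed.
End Quad.

Theorem theorem2 (R : realType) (D : nat) (Sset : set 'rV[R]_D) (A : Type)
  (H : lmodType R) (ip : H -> H -> R)
  (ev : H -> ({x : 'rV[R]_D | Sset x} * A)%type -> R)
  (kappa : ({x : 'rV[R]_D | Sset x} * A)%type ->
           ({x : 'rV[R]_D | Sset x} * A)%type -> R)
  (hH : is_RKHS ip ev kappa)
  (g : H) (alpha : R) (halpha : 0 < alpha)
  (Nav : nat) (sav : 'I_Nav -> {x : 'rV[R]_D | Sset x}) (psi : 'I_Nav -> H)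
  (hA : inhabited A)
  (hK : has_ubound [set specnorm
          (\matrix_(i, j) kappa (sav i, mu' (sav i)) (sav j, mu' (sav j)) : 'M[R]_Nav)
        | mu' in [set: {x : 'rV[R]_D | Sset x} -> A]])
  (hinf : forall (Q : H) (i : 'I_Nav), has_lbound [set ev Q (sav i, a) | a in [set: A]]) :
  let Tmu := fun (mu : {x : 'rV[R]_D | Sset x} -> A) (Q : H) =>
    g + alpha *: \sum_(i < Nav) ev Q (sav i, mu (sav i)) *: psi i in
  let T := fun Q : H =>
    g + alpha *: \sum_(i < Nav) inf [set ev Q (sav i, a) | a in [set: A]] *: psi i in
  let KPsi : 'M[R]_Nav := \matrix_(i, j) ip (psi i) (psi j) in
  let Kav := fun mu : {x : 'rV[R]_D | Sset x} -> A =>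
    (\matrix_(i, j) kappa (sav i, mu (sav i)) (sav j, mu (sav j)) : 'M[R]_Nav) in
  let beta := alpha * Num.sqrt (specnorm KPsi *
                 sup [set specnorm (Kav mu') | mu' in [set: {x : 'rV[R]_D | Sset x} -> A]]) in
  forall (Q1 Q2 : H) (mu : {x : 'rV[R]_D | Sset x} -> A),
    ipnorm ip (Tmu mu Q1 - Tmu mu Q2) <= beta * ipnorm ip (Q1 - Q2) /\
    ipnorm ip (T Q1 - T Q2) <= beta * ipnorm ip (Q1 - Q2).
Proof.
move=> Tmu T KPsi Kav beta Q1 Q2 mu.
case: hH => hip _ hev _ hrep.
have [phi hphi] := choice hrep.
set Q := Q1 - Q2.
have evB z : ev Q z = ev Q1 z - ev Q2 z.
  by rewrite /Q -scaleN1r [Q1 + _]addrC hev mulN1r addrC.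
have qq0 : 0 <= ip Q Q := ipge0 hip Q.
set SS := [set specnorm (Kav mu') | mu' in [set: {x : 'rV[R]_D | Sset x} -> A]].
have hsup : has_sup SS.
  split; last exact: hK.
  by case: hA => a0; exists (specnorm (Kav (fun=> a0))); exists (fun=> a0).
have Kle mu' : specnorm (Kav mu') <= sup SS.
  by apply: (sup_upper_bound hsup); exists mu'.
have S0 : 0 <= sup SS := le_trans (specnorm_ge0 (Kav mu)) (Kle mu).
have K1 mu' : \sum_i ev Q (sav i, mu' (sav i)) ^+ 2 <= specnorm (Kav mu') * ip Q Q.
  pose z := fun i => (sav i, mu' (sav i)).
  pose s := \sum_i ev Q (z i) ^+ 2.
  have es : s = ip Q (\sum_i ev Q (z i) *: phi (z i)).
    rewrite (ipsumr hip); apply: eq_bigr => i _.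
    by rewrite (ipZr hip) (proj2 (hphi _)) expr2.
  have hG : (\matrix_(i, j) ip (phi (z i)) (phi (z j)) : 'M_Nav) = Kav mu'.
    by apply/matrixP => i j; rewrite !mxE (proj2 (hphi _)) (proj1 (hphi _)).
  have hq := quad hip (fun i => phi (z i)) (fun i => ev Q (z i)).
  rewrite hG -/s in hq.
  have hcs := ipCS hip Q (\sum_i ev Q (z i) *: phi (z i)).
  rewrite -es in hcs.
  have s0 : 0 <= s by apply: sumr_ge0 => i _; exact: sqr_ge0.
  have K0 := specnorm_ge0 (Kav mu').
  have h2 : s * s <= (specnorm (Kav mu') * ip Q Q) * s.
    rewrite -expr2; apply: le_trans hcs _.
    rewrite mulrAC [_ * ip Q Q]mulrC; apply: ler_wpM2l => //.
  change (s <= specnorm (Kav mu') * ip Q Q).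
  have [->|sp] := eqVneq s 0; first exact: mulr_ge0.
  have spos : 0 < s by rewrite lt_def sp s0.
  by rewrite -(ler_pM2r spos).
have fin : forall a b : 'I_Nav -> R,
    \sum_i (a i - b i) ^+ 2 <= sup SS * ip Q Q ->
    ipnorm ip ((g + alpha *: \sum_i a i *: psi i) - (g + alpha *: \sum_i b i *: psi i))
      <= beta * ipnorm ip Q.
  move=> a b hab.
  have -> : (g + alpha *: \sum_i a i *: psi i) - (g + alpha *: \sum_i b i *: psi i)
      = alpha *: \sum_i (a i - b i) *: psi i.
    rewrite opprD addrACA subrr add0r -scalerBr -sumrB; congr (_ *: _).
    by apply: eq_bigr => i _; rewrite scalerBl.
  rewrite /ipnorm (ipZl hip) (ipZr hip) mulrA -expr2.
  have hq := quad hip psi (fun i => a i - b i).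
  rewrite -/KPsi in hq.
  have Kp0 : 0 <= specnorm KPsi := specnorm_ge0 KPsi.
  have -> : beta * Num.sqrt (ip Q Q)
      = Num.sqrt (alpha ^+ 2 * (specnorm KPsi * sup SS * ip Q Q)).
    rewrite /beta [RHS]sqrtrM ?sqr_ge0 // sqrtr_sqr gtr0_norm // [in RHS]sqrtrM ?mulr_ge0 //.
    by rewrite mulrA.
  apply: ler_wsqrtr; apply: ler_wpM2l; first exact: sqr_ge0.
  apply: le_trans hq _; rewrite -mulrA; by apply: ler_wpM2l.
split.
  apply: fin; apply: le_trans (ler_wpM2r qq0 (Kle mu)).
  apply: le_trans (K1 mu); rewrite le_eqVlt; apply/orP; left; apply/eqP; apply: eq_bigr => i _; by rewrite evB.
pose E1 := fun s => [set ev Q1 (s, a) | a in [set: A]].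
pose E2 := fun s => [set ev Q2 (s, a) | a in [set: A]].
pose d := fun i => inf (E1 (sav i)) - inf (E2 (sav i)).
have key : forall t, 0 < t -> t < 1 -> t ^+ 2 * \sum_i d i ^+ 2 <= sup SS * ip Q Q.
  move=> t t0 t1.
  have hex : forall s, exists a : A, (exists i, sav i = s) ->
      t * `|inf (E1 s) - inf (E2 s)| <= `|ev Q (s, a)|.
    move=> s; have [[k hk]|nex] := pselect (exists i, sav i = s); last first.
      by case: hA => a0; exists a0 => /nex.
    rewrite -hk; clear hk s.
    have [lb1 lb2] := (hinf Q1 k, hinf Q2 k).
    have [a0] := hA.
    have ne1 : E1 (sav k) !=set0 by exists (ev Q1 (sav k, a0)); exists a0.
    have ne2 : E2 (sav k) !=set0 by exists (ev Q2 (sav k, a0)); exists a0.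
    have [dlt|dgt|d0] := ltrgtP (inf (E1 (sav k)) - inf (E2 (sav k))) 0.
    - have ep : 0 < (1 - t) * - (inf (E1 (sav k)) - inf (E2 (sav k))).
        by apply: mulr_gt0; rewrite ?subr_gt0 ?oppr_gt0.
      have [_ [a _ <-] ha] := inf_adherent ep (conj ne1 lb1).
      have hb : inf (E2 (sav k)) <= ev Q2 (sav k, a) by apply: (ge_inf lb2); exists a.
      exists a => _; rewrite evB (ltr0_norm dlt) ler_normr; apply/orP; right.
      move: ha hb dlt; set x1 := inf _; set x2 := inf _; set e1 := ev Q1 _; set e2 := ev Q2 _.
      move=> ha hb dlt; nra.
    - have ep : 0 < (1 - t) * (inf (E1 (sav k)) - inf (E2 (sav k))).
        by apply: mulr_gt0; rewrite ?subr_gt0 // -subr_gt0.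
      have [_ [a _ <-] ha] := inf_adherent ep (conj ne2 lb2).
      have hb : inf (E1 (sav k)) <= ev Q1 (sav k, a) by apply: (ge_inf lb1); exists a.
      exists a => _; rewrite evB (gtr0_norm dgt) ler_normr; apply/orP; left.
      move: ha hb dgt; set x1 := inf _; set x2 := inf _; set e1 := ev Q1 _; set e2 := ev Q2 _.
      move=> ha hb dgt; nra.
    - by exists a0 => _; rewrite d0 normr0 mulr0 normr_ge0.
  have [mut hmut] := choice hex.
  apply: le_trans (ler_wpM2r qq0 (Kle mut)); apply: le_trans (K1 mut).
  rewrite mulr_sumr; apply: ler_sum => i _.
  have := hmut (sav i) (ex_intro _ i erefl).
  rewrite -/(d i); set w := ev Q _; set di := d i => h.
  have hd := real_normK (num_real di); have hw := real_normK (num_real w).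
  have n0 : 0 <= t * `|di| by rewrite mulr_ge0 // ltW.
  have nw := normr_ge0 w.
  nra.
apply: fin.
set S := \sum_i _.
have s0 : 0 <= S by apply: sumr_ge0 => i _; exact: sqr_ge0.
set C := sup SS * ip Q Q.
have c0 : 0 <= C by exact: mulr_ge0.
rewrite leNgt; apply/negP => hlt.
have Sp : 0 < S by exact: le_lt_trans hlt.
pose t := (S + C) / (2 * S).
have ht : t * (2 * S) = S + C by rewrite /t divfK // mulf_neq0 // gt_eqF.
have t0 : 0 < t by rewrite /t divr_gt0 // ?mulr_gt0 // ltr_wpDr.
have t1 : t < 1 by rewrite /t ltr_pdivrMr ?mulr_gt0 // mul1r; lra.
have := key t t0 t1; rewrite -/S => hk.
have e : (S + C) ^+ 2 = 4 * S * (t ^+ 2 * S) by rewrite -ht; ring.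
have h4 : 4 * S * (t ^+ 2 * S) <= 4 * S * C.
  by apply: ler_wpM2l => //; apply: mulr_ge0 => //; exact: ltW.
rewrite -e in h4.
nra.
Qed.
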